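(* Assume $N>2m$, where $m=\max_i r_i$. Fix all reported data except bidder $i$'s unit price. If bidder $i$ wins (is selected) under Algorithm 3 with unit price $v_i$, then it also wins with every unit price $v_i'>v_i$. Equivalently, the (deterministic) winning probability of bidder $i$ is monotonically non-decreasing in its bidding price.
   Context: Setting: a finite set of bidders $\mathcal{B}=\mathcal{B}_r\cup\mathcal{B}_u$ and $N$ resource blocks $k=1,\dots,N$, each in a sub-band $p(k)$. Bidder $i$ reports a positive integer $r_i$, a unit price $v_i\ge0$ and CQI values $c_{i,s}$ for each sub-band $s$. $\mathrm{CR}_c\ge0$ is the number of bits per RB at CQI $c$. Let $R_{ik}=v_i\mathrm{CR}_{c_{i,p(k)}}$, $m=\max_ir_i$ and $\delta=N/m$. Algorithm 3: 1. Initialize $x=0$, $\mathcal{C}_1=\emptyset$, $\mathcal{C}_2=\emptyset$, $t=0$, $\lambda_k^0=1/N$. 2. While $\mathcal{C}_1\ne\mathcal{B}$ and $\sum_k\lambda_k^t\le\exp(\delta-2)$: (a) choose $(\mu,\mathcal{D})$ maximizing $\sum_{k\in\mathcal{D}}R_{\mu k}$ over $\mu\in\mathcal{B}\setminus\mathcal{C}_1$ and $\mathcal{D}\subseteq\{1,\dots,N\}\setminus\mathcal{C}_2$ with $|\mathcal{D}|=r_\mu$; (b) set $x_\mu=1$, $a_{\mu k}=1$ for $k\in\mathcal{D}$, $\mathcal{C}_1\leftarrow\mathcal{C}_1\cup\{\mu\}$, $\mathcal{C}_2\leftarrow\mathcal{C}_2\cup\mathcal{D}$; (c) set $\lambda_k^{t+1}=\lambda_k^t\exp(\delta-2)^{r_\mu/(N-2m)}$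 for all $k$, and $t\leftarrow t+1$. Bidder $i$ wins if $x_i=1$. *)

(* Defs.v *)
From HB Require Import structures.
From mathcomp Require Import all_boot all_order all_algebra.
From mathcomp Require Import reals.
From mathcomp Require Import sequences exp.
Set Implicit Arguments. Unset Strict Implicit. Unset Printing Implicit Defensive.
Import Order.TTheory GRing.Theory Num.Theory.
Local Open Scope ring_scope.

Section Alg3.
Variables (R : realType) (B : finType) (N S : nat).
Variable (sb : 'I_N -> 'I_S).          (* p(k): sub-band of resource block k *)
Variable (CR : nat -> R).              (* CR_c : bits per RB at CQI c *)
Variable (r : B -> nat).               (* requested number of RBs r_i *)
Variable (cqi : B -> 'I_S -> nat).     (* reported CQI c_{i,s} *)
Variable (v : B -> R).

Definition Rval (j : B) (k : 'I_N) : R := v j * CR (cqi j (sb k)).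

Definition mmax : nat := \max_(j : B) r j.
Definition delta : R := N%:R / (mmax%:R).

(* algorithm state: C1 (selected bidders; x_mu = 1 iff mu \in C1),
   C2 (allocated RBs), and the multipliers lambda_k *)
Record state := State { C1 : {set B}; C2 : {set 'I_N}; lam : 'I_N -> R }.

Definition init_state : state := State set0 set0 (fun _ => (N%:R)^-1).

Definition feasible (st : state) (p : B * {set 'I_N}) : bool :=
  [&& p.1 \notin C1 st, p.2 \subset ~: C2 st & #|p.2| == r p.1].

Definition pairval (p : B * {set 'I_N}) : R := \sum_(k in p.2) Rval p.1 k.

(* Deterministic choice in step 2(a): the first maximizer (w.r.t. the fixed
   enumeration order of the finite type B * {set 'I_N}). *)
Definition choose_pair (st : state) : option (B * {set 'I_N}) :=
  [pick p | feasible st p &&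
            [forall q, feasible st q ==> (pairval q <= pairval p)]].

Definition guard (st : state) : bool :=
  (C1 st != setT) && (\sum_(k < N) lam st k <= expR (delta - 2)).

Definition update (st : state) (p : B * {set 'I_N}) : state :=
  State (p.1 |: C1 st) (C2 st :|: p.2)
        (fun k => lam st k *
                  powR (expR (delta - 2)) ((r p.1)%:R / (N%:R - 2 * mmax%:R))).

Fixpoint run (fuel : nat) (st : state) : state :=
  match fuel with
  | 0 => st
  | n.+1 => if guard st then
              match choose_pair st with
              | Some p => run n (update st p)
              | None => st
              end
            else st
  end.

(* Each iteration adds a new bidder to C1, so #|B| iterations suffice for the
   while loop to terminate. *)
Definition alg3 : state := run #|B| init_state.

Definition wins (j : B) : bool := j \in C1 alg3.

End Alg3.

(* Main.v *)
Require Import Defs.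
From HB Require Import structures.
From mathcomp Require Import all_boot all_order all_algebra.
From mathcomp Require Import reals.
From mathcomp Require Import sequences exp.
Import Order.TTheory GRing.Theory Num.Theory.
Local Open Scope ring_scope.

Lemma filter_head_sub (T : eqType) (P Q : pred T) (s : seq T) (p : T) :
  ohead (filter Q s) = Some p -> P p -> (forall x, P x -> Q x) ->
  ohead (filter P s) = Some p.
Proof.
move=> hQ hPp hPQ; elim: s hQ => [//|a s IH] /=.
case hQa: (Q a) => /=.
  by case=> ea; subst p; rewrite hPp.
case hPa: (P a); last exact: IH.
by move: (hPQ _ hPa); rewrite hQa.
Qed.

Lemma pick_sub (T : finType) (P Q : pred T) (p : T) :
  pick Q = Some p -> P p -> (forall x, P x -> Q x) -> pick P = Some p.
Proof. rewrite /pick /enum_mem; exact: filter_head_sub. Qed.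

Lemma C1_run (R : realType) (B : finType) (N S : nat)
  (sb : 'I_N -> 'I_S) (CR : nat -> R) (r : B -> nat)
  (cqi : B -> 'I_S -> nat) (v : B -> R) n st j :
  j \in C1 st -> j \in C1 (run sb CR r cqi v n st).
Proof.
elim: n st => [//|n IH] st hj /=.
case: (guard r st) => //; case: (choose_pair _ _ _ _ _ st) => // p.
by apply: IH; rewrite /= in_setU1 hj orbT.
Qed.

Lemma run_S (R : realType) (B : finType) (N S : nat)
  (sb : 'I_N -> 'I_S) (CR : nat -> R) (r : B -> nat)
  (cqi : B -> 'I_S -> nat) (v : B -> R) n st :
  run sb CR r cqi v n.+1 st =
  if guard r st then
    match choose_pair sb CR r cqi v st with
    | Some p => run sb CR r cqi v n (update r st p)
    | None => st
    end
  else st.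
Proof. by []. Qed.

Theorem lemma2 (R : realType) (B : finType) (N S : nat)
  (sb : 'I_N -> 'I_S) (CR : nat -> R) (r : B -> nat)
  (cqi : B -> 'I_S -> nat) (v : B -> R)
  (hr : forall j, (0 < r j)%N) (hCR : forall c, 0 <= CR c)
  (hv : forall j, 0 <= v j)
  (hN : (2 * mmax r < N)%N)
  (i : B) (vi' : R) (hvi' : v i < vi') :
  wins sb CR r cqi v i ->
  wins sb CR r cqi (fun j => if j == i then vi' else v j) i.
Proof.
set v' := (fun j => if j == i then vi' else v j).
have hle : forall q, pairval sb CR cqi v q <= pairval sb CR cqi v' q.
  move=> q; rewrite /pairval; apply: ler_sum => k _; rewrite /Rval /v'.
  case: eqP => [->|_] //; apply: ler_wpM2r => //; exact: ltW.
have heq : forall q, q.1 != i -> pairval sb CR cqi v q = pairval sb CR cqi v' q.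
  move=> q hq; rewrite /pairval; apply: eq_bigr => k _; rewrite /Rval /v'.
  by rewrite (negbTE hq).
have key : forall st q, choose_pair sb CR r cqi v' st = Some q -> q.1 != i ->
    choose_pair sb CR r cqi v st = Some q.
  move=> st q hq hqi; move: (hq); rewrite /choose_pair => hq'.
  have : feasible r st q &&
      [forall q0, feasible r st q0 ==> (pairval sb CR cqi v' q0 <= pairval sb CR cqi v' q)].
    by move: hq'; case: pickP => // x hx [<-].
  move=> /andP [hfq /forallP hmq].
  apply: pick_sub hq' _ _ => /=.
    rewrite hfq /=; apply/forallP => q0; apply/implyP => hf0.
    rewrite (heq q hqi); apply: le_trans (hle q0) _.
    exact: (implyP (hmq q0) hf0).
  move=> x /andP [hfx /forallP hmx]; rewrite hfx /=.
  have e1 : pairval sb CR cqi v x = pairval sb CR cqi v' q.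
    apply/eqP; rewrite eq_le; apply/andP; split.
      apply: le_trans (hle x) _; exact: (implyP (hmq x) hfx).
    rewrite -(heq q hqi); exact: (implyP (hmx q) hfq).
  have e2 : pairval sb CR cqi v' x = pairval sb CR cqi v' q.
    apply/eqP; rewrite eq_le; apply/andP; split.
      exact: (implyP (hmq x) hfx).
    by rewrite -e1.
  apply/forallP => q0; apply/implyP => hf0; rewrite e2.
  exact: (implyP (hmq q0) hf0).
have nonone : forall st p, choose_pair sb CR r cqi v st = Some p ->
    choose_pair sb CR r cqi v' st <> None.
  move=> st p hp; move: hp; rewrite /choose_pair.
  case: pickP => // x /andP [hfx _] _.
  case: (@arg_maxP _ _ _ x (feasible r st) (pairval sb CR cqi v') hfx).
  move=> y hfy hmy.
  case: pickP => // hnone _; have := hnone y; rewrite /= hfy /=.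
  move=> /negbT /negP; apply; apply/forallP => q0; apply/implyP; exact: hmy.
rewrite /wins /alg3.
suff H : forall n st, i \in C1 (run sb CR r cqi v n st) ->
  i \in C1 (run sb CR r cqi v' n st) by apply: H.
elim=> [|n IH] st; first by [].
rewrite !run_S.
case: (guard r st) => //.
case hp: (choose_pair sb CR r cqi v st) => [p|].
  case hq: (choose_pair sb CR r cqi v' st) => [q|]; last by have := nonone _ _ hp.
  case: (eqVneq q.1 i) => [hqi|hqi].
    move=> _; apply: C1_run; by rewrite /= in_setU1 hqi eqxx.
  by move: (key _ _ hq hqi); rewrite hp => -[->]; apply: IH.
move=> hi; case: (choose_pair sb CR r cqi v' st) => [q|//].
by apply: C1_run; rewrite /= in_setU1 hi orbT.
Qed.
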